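(* Let $J$ be a $\times d$-invariant set. For $x\in\mathbb{R}$ let $J_x=\{t-x:t\in J\}$. If $x\in\mathbb{R}$ is such that $\mathbb{Q}\cap J_x\neq\emptyset$, then $\mathbb{Q}\cap J_x$ is dense in $J_x$, and there exists $K<\infty$ such that every point $y\in J_x$ is intrinsically approximable (relative to $J_x$) with respect to the constant function $\psi(q)=K$.
   Context: Fix an integer $d\ge2$ and $E\subseteq\{0,\dots,d-1\}$ with $1<\#E<d$. The $\times d$-invariant set is $J=\{x\in[0,1]: x=\sum_{i\ge1}a_id^{-i}\text{ with all }a_i\in E\}$. For $S\subseteq\mathbb{R}$ and $\psi:\mathbb{N}\to(0,\infty)$, a point $y\in S$ is intrinsically approximable with respect to $\psi$ if there are infinitely many rationals $p/q\in\mathbb{Q}\cap S$ (lowest terms, $q\ge1$) with $|y-p/q|\le\psi(q)/q$. *)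

(* Defs.v *)
From Stdlib Require Import Reals Lra Lia ZArith List.
Open Scope R_scope.

(* x = sum_{i>=1} a_i d^{-i}  (the series indexed from i = 1) *)
Definition base_d_expansion (d : nat) (a : nat -> nat) (x : R) : Prop :=
  infinite_sum (fun i => INR (a (S i)) / INR d ^ (S i)) x.

Definition Jset (d : nat) (E : list nat) (x : R) : Prop :=
  0 <= x <= 1 /\
  exists a : nat -> nat,
    (forall i, (1 <= i)%nat -> In (a i) E) /\ base_d_expansion d a x.

Definition Jshift (d : nat) (E : list nat) (x : R) (s : R) : Prop :=
  exists t, Jset d E t /\ s = t - x.

Definition is_rational (r : R) : Prop :=
  exists (p : Z) (q : nat), (1 <= q)%nat /\ r = IZR p / INR q.

Definition rationals_dense_in (S : R -> Prop) : Prop :=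
  forall y, S y -> forall eps, 0 < eps ->
    exists r, is_rational r /\ S r /\ Rabs (y - r) < eps.

(* y in S is intrinsically approximable w.r.t. psi: infinitely many rationals
   p/q in S (lowest terms, q >= 1) with |y - p/q| <= psi(q)/q.
   "Infinitely many" = not contained in any finite list. *)
Definition intrinsically_approximable (S : R -> Prop) (psi : nat -> R) (y : R)
  : Prop :=
  S y /\
  forall l : list R,
    exists (p : Z) (q : nat),
      (1 <= q)%nat /\ Z.gcd p (Z.of_nat q) = 1%Z /\
      S (IZR p / INR q) /\ ~ In (IZR p / INR q) l /\
      Rabs (y - IZR p / INR q) <= psi q / INR q.

(* Main.v *)
Require Import Defs.
From Stdlib Require Import Reals ZArith List Lra Lia.
Open Scope R_scope.

Fixpoint P (d : nat) (a : nat -> nat) (n : nat) : R :=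
  match n with O => 0 | S m => P d a m + INR (a (S m)) / INR d ^ S m end.
Fixpoint Pn (d : nat) (a : nat -> nat) (n : nat) : nat :=
  match n with O => O | S m => (Pn d a m * d + a (S m))%nat end.

Lemma sum_P d a N :
  sum_f_R0 (fun i => INR (a (S i)) / INR d ^ S i) N = P d a (S N).
Proof. induction N. simpl; ring. change (sum_f_R0 (fun i => INR (a (S i)) / INR d ^ S i) N + INR (a (S (S N))) / INR d ^ S (S N) = P d a (S (S N))). rewrite IHN. reflexivity. Qed.

Lemma Dpos d : (2 <= d)%nat -> 2 <= INR d.
Proof. intro h. apply le_INR in h. simpl in h. lra. Qed.

Lemma P_Pn d a n : (2 <= d)%nat -> P d a n = INR (Pn d a n) / INR d ^ n.
Proof.
  intro hd. pose proof (Dpos d hd). induction n. simpl; field.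
  simpl P; simpl Pn. rewrite IHn, plus_INR, mult_INR.
  assert (INR d ^ n <> 0) by (apply pow_nonzero; lra).
  simpl. field. split; lra.
Qed.

Lemma P_bound d a n k : (2 <= d)%nat -> (forall i, (1 <= i)%nat -> (a i < d)%nat) ->
  P d a n <= P d a (n + k) <= P d a n + / INR d ^ n - / INR d ^ (n + k).
Proof.
  intros hd ha. pose proof (Dpos d hd). induction k.
  rewrite Nat.add_0_r. lra.
  rewrite Nat.add_succ_r. change (P d a (S (n+k))) with (P d a (n+k) + INR (a (S (n + k))) / INR d ^ S (n + k)).
  assert (h1 : INR (a (S (n + k))) <= INR d - 1).
  { assert (S (a (S (n+k))) <= d)%nat by (apply ha; lia).
    apply le_INR in H0. rewrite S_INR in H0. lra. }
  assert (hp : 0 < INR d ^ (n + k)) by (apply pow_lt; lra).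
  assert (h2 : 0 <= INR (a (S (n + k))) / INR d ^ S (n + k)).
  { apply Rmult_le_pos. apply pos_INR. left; apply Rinv_0_lt_compat, pow_lt; lra. }
  assert (h3 : INR (a (S (n + k))) / INR d ^ S (n + k) <= / INR d ^ (n+k) - / INR d ^ S (n+k)).
  { replace (/ INR d ^ (n+k) - / INR d ^ S (n+k)) with ((INR d - 1) / INR d ^ S (n+k)).
    apply Rmult_le_compat_r. left; apply Rinv_0_lt_compat, pow_lt; lra. lra.
    simpl. field. split; lra. }
  lra.
Qed.

Lemma P_value d a v n : (2 <= d)%nat -> (forall i, (1 <= i)%nat -> (a i < d)%nat) ->
  base_d_expansion d a v -> P d a n <= v <= P d a n + / INR d ^ n.
Proof.
  intros hd ha hv. pose proof (Dpos d hd). split.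
  - destruct (Rle_or_lt (P d a n) v) as [h|h]; auto.
    destruct (hv (P d a n - v)) as [N0 HN]; [lra|].
    specialize (HN (max N0 n) (Nat.le_max_l _ _)). rewrite sum_P in HN.
    unfold Rdist in HN. apply Rabs_def2 in HN.
    destruct (P_bound d a n (S (max N0 n) - n) hd ha) as [hb _].
    replace (n + (S (max N0 n) - n))%nat with (S (max N0 n)) in hb by lia. lra.
  - destruct (Rle_or_lt v (P d a n + / INR d ^ n)) as [h|h]; auto.
    destruct (hv (v - (P d a n + / INR d ^ n))) as [N0 HN]; [lra|].
    specialize (HN (max N0 n) (Nat.le_max_l _ _)). rewrite sum_P in HN.
    unfold Rdist in HN. apply Rabs_def2 in HN.
    destruct (P_bound d a n (S (max N0 n) - n) hd ha) as [_ hb].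
    replace (n + (S (max N0 n) - n))%nat with (S (max N0 n)) in hb by lia.
    assert (0 < / INR d ^ S (max N0 n)) by (apply Rinv_0_lt_compat, pow_lt; lra).
    lra.
Qed.

Lemma P_agree_tail d c b m k : (forall i, (m < i)%nat -> c i = b i) ->
  P d c (m + k) - P d b (m + k) = P d c m - P d b m.
Proof.
  intro h. induction k. rewrite Nat.add_0_r; ring.
  rewrite Nat.add_succ_r. simpl P. rewrite h by lia. lra.
Qed.

Lemma P_agree d c a n : (forall i, (1 <= i <= n)%nat -> c i = a i) -> P d c n = P d a n.
Proof.
  intro h. assert (forall k, (k <= n)%nat -> P d c k = P d a k).
  { induction k; intros hk. reflexivity. simpl. rewrite IHk by lia. rewrite h by lia. reflexivity. }
  apply H; lia.
Qed.

Lemma expansion_tail d c b t0 m : (forall i, (m < i)%nat -> c i = b i) ->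
  base_d_expansion d b t0 -> base_d_expansion d c (t0 - P d b m + P d c m).
Proof.
  intros h hb eps he. destruct (hb eps he) as [N0 HN]. exists (max N0 m).
  intros k hk. specialize (HN k ltac:(lia)). rewrite sum_P in *.
  pose proof (P_agree_tail d c b m (S k - m) h).
  replace (m + (S k - m))%nat with (S k) in H by lia.
  unfold Rdist in *. replace (P d c (S k) - (t0 - P d b m + P d c m)) with (P d b (S k) - t0) by lra.
  exact HN.
Qed.

Definition digits_ok (E : list nat) (a : nat -> nat) := forall i, (1 <= i)%nat -> In (a i) E.

Lemma digits_lt d E a : (forall e, In e E -> (e < d)%nat) -> digits_ok E a ->
  forall i, (1 <= i)%nat -> (a i < d)%nat.
Proof. intros h1 h2 i hi. apply h1, h2, hi. Qed.

Lemma approx d E a b t t0 n e : (2 <= d)%nat -> (forall e, In e E -> (e < d)%nat) ->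
  digits_ok E a -> base_d_expansion d a t -> digits_ok E b -> base_d_expansion d b t0 ->
  In e E ->
  Jset d E (t0 - P d b (S n) + P d a n + INR e / INR d ^ S n) /\
  Rabs (t - (t0 - P d b (S n) + P d a n + INR e / INR d ^ S n)) <= / INR d ^ n.
Proof.
  intros hd hE ha hta hb htb he.
  set (c := fun i => if (i <=? n)%nat then a i else if (i =? S n)%nat then e else b i).
  assert (hc : digits_ok E c).
  { intros i hi. unfold c. destruct (i <=? n)%nat. apply ha, hi.
    destruct (i =? S n)%nat. exact he. apply hb, hi. }
  assert (hct : forall i, (S n < i)%nat -> c i = b i).
  { intros i hi. unfold c. destruct (Nat.leb_spec i n). lia.
    destruct (Nat.eqb_spec i (S n)). lia. reflexivity. }
  assert (hca : P d c n = P d a n).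
  { apply P_agree. intros i hi. unfold c. destruct (Nat.leb_spec i n). reflexivity. lia. }
  assert (hcS : P d c (S n) = P d a n + INR e / INR d ^ S n).
  { change (P d c (S n)) with (P d c n + INR (c (S n)) / INR d ^ S n).
    rewrite hca. unfold c. destruct (Nat.leb_spec (S n) n). lia. rewrite Nat.eqb_refl. reflexivity. }
  pose proof (expansion_tail d c b t0 (S n) hct htb) as hexp.
  replace (t0 - P d b (S n) + P d a n + INR e / INR d ^ S n) with (t0 - P d b (S n) + P d c (S n)) by (rewrite hcS; ring).
  set (u := t0 - P d b (S n) + P d c (S n)) in *.
  pose proof (P_value d c u 0 hd (digits_lt d E c hE hc) hexp) as h0. simpl in h0.
  pose proof (P_value d c u n hd (digits_lt d E c hE hc) hexp) as h1.
  pose proof (P_value d a t n hd (digits_lt d E a hE ha) hta) as h2.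
  split.
  - split. lra. exists c. split; assumption.
  - rewrite hca in h1. unfold Rabs. destruct (Rcase_abs _); lra.
Qed.

Lemma lowest (A : Z) (B : nat) : (1 <= B)%nat -> exists p q,
  (1 <= q)%nat /\ (q <= B)%nat /\ Z.gcd p (Z.of_nat q) = 1%Z /\ IZR A / INR B = IZR p / INR q.
Proof.
  intro hB. set (g := Z.gcd A (Z.of_nat B)).
  assert (hg : (0 < g)%Z).
  { assert (0 <= g)%Z by apply Z.gcd_nonneg.
    assert (g <> 0%Z). { intro h0. apply Z.gcd_eq_0_r in h0. lia. } lia. }
  destruct (Z.gcd_divide_l A (Z.of_nat B)) as [p hp].
  destruct (Z.gcd_divide_r A (Z.of_nat B)) as [qz hq]. fold g in hp, hq.
  assert (hqz : (1 <= qz)%Z) by nia.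
  assert (qz <= Z.of_nat B)%Z by nia.
  exists p, (Z.to_nat qz). split. lia. split. lia. split.
  - rewrite Z2Nat.id by lia.
    pose proof (Z.gcd_div_gcd A (Z.of_nat B) g ltac:(lia) eq_refl) as hgcd.
    rewrite hp, hq in hgcd.
    rewrite !Z.div_mul in hgcd by lia. exact hgcd.
  - rewrite (INR_IZR_INZ (Z.to_nat qz)), Z2Nat.id by lia. rewrite INR_IZR_INZ, hq, hp, !mult_IZR.
    assert (IZR g <> 0) by (apply not_0_IZR; lia).
    assert (IZR qz <> 0) by (apply not_0_IZR; lia). field. split; auto.
Qed.

Definition U d a b t0 n (e : nat) := t0 - P d b (S n) + P d a n + INR e / INR d ^ S n.

Lemma cand d E a b t t0 x p0 q0 n e : (2 <= d)%nat -> (forall e, In e E -> (e < d)%nat) ->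
  digits_ok E a -> base_d_expansion d a t -> digits_ok E b -> base_d_expansion d b t0 ->
  Jset d E t -> Jset d E t0 ->
  In e E -> (1 <= q0)%nat -> t0 - x = IZR p0 / INR q0 ->
  exists p q, (1 <= q)%nat /\ Z.gcd p (Z.of_nat q) = 1%Z /\
    Jshift d E x (IZR p / INR q) /\ IZR p / INR q = U d a b t0 n e - x /\
    Rabs ((t - x) - IZR p / INR q) <= / INR d ^ n /\
    Rabs ((t - x) - IZR p / INR q) <= INR d * INR q0 / INR q.
Proof.
  intros hd hE ha hta hb htb hJt hJt0 he hq0 hr.
  destruct (approx d E a b t t0 n e hd hE ha hta hb htb he) as [hJ hab].
  fold (U d a b t0 n e) in hJ, hab.
  set (Dn := (d ^ S n)%nat).
  assert (hD : 2 <= INR d) by (apply Dpos, hd).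
  assert (hDn : INR Dn = INR d ^ S n) by (unfold Dn; apply pow_INR).
  assert (hDnp : 0 < INR d ^ S n) by (apply pow_lt; lra).
  set (N := (Z.of_nat (Pn d a n * d + e) - Z.of_nat (Pn d b (S n)))%Z).
  assert (hUN : U d a b t0 n e - t0 = IZR N / INR Dn).
  { unfold U, N. rewrite hDn, minus_IZR, <- !INR_IZR_INZ, plus_INR, mult_INR.
    rewrite !P_Pn by exact hd. simpl. assert (INR d ^ n <> 0) by (apply pow_nonzero; lra). field. split; lra. }
  assert (hDn1 : (1 <= Dn)%nat).
  { apply INR_le. rewrite hDn. simpl INR. assert (1 <= INR d ^ S n) by (apply pow_R1_Rle; lra). lra. }
  destruct (lowest (p0 * Z.of_nat Dn + N * Z.of_nat q0) (q0 * Dn) ltac:(nia)) as (p & q & hq1 & hqle & hg & heq).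
  assert (hz : IZR p / INR q = U d a b t0 n e - x).
  { rewrite <- heq. replace (U d a b t0 n e - x) with ((t0 - x) + (U d a b t0 n e - t0)) by ring.
    rewrite hr, hUN, plus_IZR, !mult_IZR, <- !INR_IZR_INZ, mult_INR.
    assert (INR q0 <> 0). { apply not_0_INR. lia. }
    assert (INR Dn <> 0). { apply not_0_INR. lia. }
    field. split; auto. }
  exists p, q. split. exact hq1. split. exact hg. split.
  { exists (U d a b t0 n e). split. exact hJ. exact hz. }
  split. exact hz.
  assert (hb1 : Rabs ((t - x) - IZR p / INR q) <= / INR d ^ n).
  { rewrite hz. replace (t - x - (U d a b t0 n e - x)) with (t - U d a b t0 n e) by ring. exact hab. }
  split. exact hb1.
  eapply Rle_trans. exact hb1.
  apply le_INR in hqle. rewrite mult_INR, hDn in hqle.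
  assert (hq : 1 <= INR q) by (apply (le_INR 1); exact hq1).
  assert (hq0' : 1 <= INR q0) by (apply (le_INR 1); exact hq0).
  assert (hpn : 0 < INR d ^ n) by (apply pow_lt; lra).
  replace (/ INR d ^ n) with (INR d * INR q0 / (INR q0 * INR d ^ S n)) by (simpl; field; split; lra).
  apply Rmult_le_compat_l. apply Rmult_le_pos; lra.
  apply Rinv_le_contravar; lra.
Qed.

Lemma min_dist (l : list R) y : exists del, 0 < del /\
  forall w, In w l -> w <> y -> del <= Rabs (y - w).
Proof.
  induction l as [|w0 l IH]. exists 1. split. lra. intros w [].
  destruct IH as [del [hd h]].
  destruct (Req_dec w0 y) as [e|ne].
  - exists del. split. exact hd. intros w [<-|hw] hne. contradiction. apply h; auto.
  - exists (Rmin del (Rabs (y - w0))). split.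
    apply Rmin_pos. exact hd. apply Rabs_pos_lt. intro; apply ne; lra.
    intros w [<-|hw] hne. apply Rmin_r. eapply Rle_trans. apply Rmin_l. apply h; auto.
Qed.

Lemma small_pow d eps : (2 <= d)%nat -> 0 < eps -> exists n, / INR d ^ n < eps.
Proof.
  intros hd he. pose proof (Dpos d hd).
  destruct (pow_lt_1_zero (/ INR d)) with (y := eps) as [N hN].
  { rewrite Rabs_pos_eq. apply (Rmult_lt_reg_l (INR d)). lra. rewrite Rinv_r; lra.
    left; apply Rinv_0_lt_compat; lra. }
  exact he.
  exists N. specialize (hN N (le_n N)). rewrite pow_inv in hN.
  rewrite Rabs_pos_eq in hN. exact hN. left; apply Rinv_0_lt_compat, pow_lt; lra.
Qed.

Theorem lemma3p4 (d : nat) (E : list nat)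
  (hd : (2 <= d)%nat) (hEnd : NoDup E) (hEd : forall e, In e E -> (e < d)%nat)
  (hE1 : (1 < length E)%nat) (hE2 : (length E < d)%nat)
  (x : R) (hx : exists r, is_rational r /\ Jshift d E x r) :
  rationals_dense_in (Jshift d E x) /\
  exists K : R, 0 < K /\
    forall y, Jshift d E x y ->
      intrinsically_approximable (Jshift d E x) (fun _ => K) y.
Proof.
  destruct hx as (r & (p0 & q0 & hq0 & hr) & t0 & hJt0 & hrt).
  destruct E as [|e1 [|e2 E']]; simpl in hE1; try lia.
  assert (he1 : In e1 (e1 :: e2 :: E')) by (simpl; auto).
  assert (he2 : In e2 (e1 :: e2 :: E')) by (simpl; auto).
  assert (hne : e1 <> e2). { inversion hEnd; subst. intro; subst. apply H1; simpl; auto. }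
  set (E := e1 :: e2 :: E') in *.
  pose proof hJt0 as [_ (b & hb & htb)].
  assert (hr' : t0 - x = IZR p0 / INR q0) by lra.
  pose proof (Dpos d hd) as hD.
  split.
  - intros y (t & hJt & hy) eps heps. pose proof hJt as [_ (a & ha & hta)].
    destruct (small_pow d eps hd heps) as [n hn].
    destruct (cand d E a b t t0 x p0 q0 n e1 hd hEd ha hta hb htb hJt hJt0 he1 hq0 hr')
      as (p & q & hq1 & _ & hJ & _ & hb1 & _).
    exists (IZR p / INR q). split. exists p, q; auto. split. exact hJ. subst y. lra.
  - exists (INR d * INR q0). split.
    { apply Rmult_lt_0_compat. lra. apply (lt_INR 0); lia. }
    intros y hy. split. exact hy. intros l. destruct hy as (t & hJt & hy).
    pose proof hJt as [_ (a & ha & hta)].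
    destruct (min_dist l y) as (del & hdel & hl).
    destruct (small_pow d del hd hdel) as [n hn].
    destruct (cand d E a b t t0 x p0 q0 n e1 hd hEd ha hta hb htb hJt hJt0 he1 hq0 hr')
      as (p1 & q1 & hq1 & hg1 & hJ1 & hz1 & hb1 & hk1).
    destruct (cand d E a b t t0 x p0 q0 n e2 hd hEd ha hta hb htb hJt hJt0 he2 hq0 hr')
      as (p2 & q2 & hq2 & hg2 & hJ2 & hz2 & hb2 & hk2).
    assert (hdiff : IZR p1 / INR q1 <> IZR p2 / INR q2).
    { rewrite hz1, hz2. unfold U. intro h.
      assert (INR e1 / INR d ^ S n = INR e2 / INR d ^ S n) by lra.
      assert (hp : 0 < INR d ^ S n) by (apply pow_lt; lra).
      apply hne, INR_eq. apply (Rmult_eq_reg_r (/ INR d ^ S n)). exact H.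
      apply Rinv_neq_0_compat; lra. }
    subst y.
    destruct (Req_dec (IZR p1 / INR q1) (t - x)) as [h1|h1].
    + exists p2, q2. repeat split; auto.
      intro hin. specialize (hl _ hin). assert (IZR p2 / INR q2 <> t - x) by (intro; apply hdiff; lra).
      specialize (hl H). lra.
    + exists p1, q1. repeat split; auto.
      intro hin. specialize (hl _ hin h1). lra.
Qed.
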